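(* Let $A$ be an infinite alphabet and let $M\in\mathbb{N}$ with $M\geq 1$. Let $\tilde f:A^{M+2}\to\{0,1\}$ be a map satisfying: (1) there exist $x_1,\dots,x_M\in A$ such that there are infinitely many $x_{M+1}\in A$ for which $$1=\tilde f(x_1,x_2,\dots,x_M,x_{M+1},x_1)=\tilde f(x_2,x_3,\dots,x_{M+1},x_1,x_2)=\cdots=\tilde f(x_M,x_{M+1},x_1,\dots,x_M)=\tilde f(x_{M+1},x_1,x_2,\dots,x_{M+1}),$$ i.e. $\tilde f$ takes the value $1$ on each of the $M+1$ words of length $M+2$ obtained by reading $M+2$ consecutive letters of the periodic sequence $x_1x_2\cdots x_Mx_{M+1}x_1x_2\cdots$ starting at positions $1,2,\dots,M+1$; (2) for each $(x_1,\dots,x_{M+1})\in A^{M+1}$ there are only finitely many $x_{M+2}\in A$ with $\tilde f(x_1,\dots,x_{M+1},x_{M+2})=1$. Let $f$ be the $(M+1)$-step shift map induced by $\tilde f$ and $X_f$ the associated $(M+1)$-step shift space. Then $X_f$ is not conjugate to any $M$-step shift space (over any alphabet $B$).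
   Context: Following Ott–Tomforde–Willis. For an alphabet $A$, let $\emptyset$ denote the empty sequence, $\Sigma_A^{fin}=\{\emptyset\}\cup\bigcup_{k\ge1}A^k$, $\Sigma_A^{inf}=A^{\mathbb N}$. The full shift is $\Sigma_A=\Sigma_A^{inf}$ if $A$ is finite and $\Sigma_A=\Sigma_A^{inf}\cup\Sigma_A^{fin}$ if $A$ is infinite. The length $l(x)$ is $k$ if $x\in A^k$ (with $l(\emptyset)=0$) and $\infty$ if $x\in\Sigma_A^{inf}$. The topology on $\Sigma_A$ has as basis the generalized cylinders $Z(x,F)=\{y\in\Sigma_A: y_i=x_i\ (1\le i\le k),\ y_{k+1}\notin F\}$ for $x=(x_1,\dots,x_k)\neq\emptyset$ and finite $F\subseteq A$, and $Z(\emptyset,F)=\{y\in\Sigma_A: y_1\notin F\}$ (the condition $y_{k+1}\notin F$ is vacuous when $F=\emptyset$; when $F\ne\emptyset$ it requires $l(y)\ge k+1$ or... precisely, $y$ of length $k$ belongs to $Z(x,F)$ as $y_{k+1}$ does not exist). The shift map $\sigma$ deletes the first letter (and sends $\emptyset$ and length-one words to $\emptyset$). A subblock of $x\in\Sigma_A$ is $u\in\Sigma_A^{fin}$ with $x=vuz$ for some $v\in\Sigma_A^{fin}$, $z\in\Sigma_A$. For $f:\bigcup_{k\ge1}A^k\to\{0,1\}$, let $X_f^{inf}=\{x\in\Sigma_A^{inf}: f(u)=1$ for every nonempty subblock $u$ of $x\}$, $X_f^{fin}=\{x\in\Sigma_A^{fin}:$ there are infinitely many $a\in A$ for which some $y\in\Sigma_A^{inf}$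 has $xay\in X_f^{inf}\}$, and $X_f=X_f^{inf}\cup X_f^{fin}$. Given $N\ge0$ and $\tilde f:A^{N+1}\to\{0,1\}$, the $N$-step shift map induced by $\tilde f$ is $f(x)=1$ if $|x|\le N$ and $f(x)=\prod_{i=1}^{|x|-N}\tilde f(x_i,\dots,x_{N+i})$ if $|x|\ge N+1$. A subset of $\Sigma_A$ is an $N$-step shift space iff it equals $X_f$ for some $N$-step shift map $f$ induced by some $\tilde f:A^{N+1}\to\{0,1\}$ (equivalently, it is the shift space defined by a set of forbidden words all of length $N+1$). A conjugacy between shift spaces $\Lambda\subseteq\Sigma_A$ and $Y\subseteq\Sigma_B$ is a bijection $\phi:\Lambda\to Y$ that is continuous, commutes with the shift maps, and satisfies $l(\phi(x))=l(x)$ for all $x\in\Lambda$. *)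

(* Defs.v *)
From Stdlib Require Import List Arith Bool.
Import ListNotations.
Set Implicit Arguments.

Definition infinite_type (A : Type) : Prop := ~ exists l : list A, forall a : A, In a l.

Definition infinitely_many (A : Type) (P : A -> Prop) : Prop :=
  ~ exists l : list A, forall a, P a -> In a l.

Definition finitely_many (A : Type) (P : A -> Prop) : Prop :=
  exists l : list A, forall a, P a -> In a l.

(* Points: finite words (incl. the empty sequence) or infinite sequences.
   Letters are indexed from 0 (the paper indexes from 1). *)
Inductive pt (A : Type) : Type :=
| Fin : list A -> pt A
| Inf : (nat -> A) -> pt A.
Arguments Fin {A}. Arguments Inf {A}.

(* membership in the full shift Sigma_A: finite words only when A is infinite *)
Definition inSigma (A : Type) (p : pt A) : Prop :=
  match p with Fin _ => infinite_type A | Inf _ => True end.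

(* length: Some k for a word of length k, None for infinity *)
Definition len (A : Type) (p : pt A) : option nat :=
  match p with Fin w => Some (length w) | Inf _ => None end.

Definition get (A : Type) (p : pt A) (i : nat) : option A :=
  match p with Fin w => nth_error w i | Inf x => Some (x i) end.

Definition shift (A : Type) (p : pt A) : pt A :=
  match p with
  | Fin w => Fin (tl w)
  | Inf x => Inf (fun n => x (S n))
  end.

(* generalized cylinder Z(x,F) in Sigma_A, F a finite subset given by a list *)
Definition cyl (A : Type) (x : list A) (F : list A) (y : pt A) : Prop :=
  inSigma y /\
  (forall i a, nth_error x i = Some a -> get y i = Some a) /\
  (forall a, get y (length x) = Some a -> ~ In a F).

(* open subsets of Sigma_A: unions of generalized cylinders *)
Definition is_open (A : Type) (U : pt A -> Prop) : Prop :=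
  forall y, U y -> exists x F, cyl x F y /\ forall z, cyl x F z -> U z.

(* continuity of phi restricted to Lam (subspace topologies) *)
Definition continuous_on (A B : Type) (Lam : pt A -> Prop) (phi : pt A -> pt B) : Prop :=
  forall V : pt B -> Prop, is_open V ->
    exists U : pt A -> Prop, is_open U /\ forall x, Lam x -> (U x <-> V (phi x)).

Definition conjugate (A : Type) (Lam : pt A -> Prop) (B : Type) (Y : pt B -> Prop) : Prop :=
  exists phi : pt A -> pt B,
    (forall x, Lam x -> Y (phi x)) /\
    (forall x y, Lam x -> Lam y -> phi x = phi y -> x = y) /\
    (forall y, Y y -> exists x, Lam x /\ phi x = y) /\
    continuous_on Lam phi /\
    (forall x, Lam x -> phi (shift x) = shift (phi x)) /\
    (forall x, Lam x -> len (phi x) = len x).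

Definition block (A : Type) (x : nat -> A) (i k : nat) : list A :=
  map (fun j => x (i + j)) (seq 0 k).

Definition cons_seq (A : Type) (a : A) (y : nat -> A) : nat -> A :=
  fun n => match n with 0 => a | S m => y m end.
Definition app_seq (A : Type) (l : list A) (y : nat -> A) : nat -> A :=
  fold_right (@cons_seq A) y l.

(* X_f^inf, X_f^fin, X_f for f : (nonempty words) -> {0,1} *)
Definition Xinf (A : Type) (f : list A -> bool) (x : nat -> A) : Prop :=
  forall i k, 1 <= k -> f (block x i k) = true.
Definition Xfin (A : Type) (f : list A -> bool) (w : list A) : Prop :=
  infinitely_many (fun a : A => exists y : nat -> A, Xinf f (app_seq (w ++ [a]) y)).
Definition Xf (A : Type) (f : list A -> bool) (p : pt A) : Prop :=
  match p with Fin w => Xfin f w | Inf x => Xinf f x end.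

(* N-step shift map induced by ft : A^{N+1} -> {0,1}
   (ft is given on all lists; only its values on words of length N+1 are used) *)
Definition f_ind (A : Type) (N : nat) (ft : list A -> bool) (w : list A) : bool :=
  if length w <=? N then true
  else forallb (fun i => ft (firstn (S N) (skipn i w))) (seq 0 (length w - N)).

Definition is_Nstep_shift (B : Type) (N : nat) (Y : pt B -> Prop) : Prop :=
  exists ft : list B -> bool, forall p, Y p <-> Xf (f_ind N ft) p.

(* Main.v *)
Require Import Defs.
From Stdlib Require Import List Arith Bool Lia Classical FunctionalExtensionality.
Import ListNotations.

Lemma block_S (A : Type) (x : nat -> A) i k : block x i (S k) = x i :: block x (S i) k.
Proof.
  unfold block. simpl. rewrite Nat.add_0_r. f_equal.
  rewrite <- seq_shift, map_map. apply map_ext. intros j. f_equal. lia.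
Qed.

Lemma block_0 (A : Type) (x : nat -> A) i : block x i 0 = [].
Proof. reflexivity. Qed.

Lemma block_length (A : Type) (x : nat -> A) i k : length (block x i k) = k.
Proof. unfold block. rewrite length_map, length_seq. reflexivity. Qed.

Lemma block_ext (A : Type) (x y : nat -> A) i k :
  (forall n, x n = y n) -> block x i k = block y i k.
Proof. intros H. unfold block. apply map_ext. intros; apply H. Qed.

Lemma block_skipn (A : Type) (x : nat -> A) j : forall i k,
  skipn j (block x i k) = block x (i + j) (k - j).
Proof.
  induction j; intros i k.
  - simpl. rewrite Nat.add_0_r, Nat.sub_0_r. reflexivity.
  - destruct k. { reflexivity. }
    rewrite block_S. simpl skipn. rewrite IHj. f_equal. lia.
Qed.

Lemma block_firstn (A : Type) (x : nat -> A) n : forall i k, n <= k ->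
  firstn n (block x i k) = block x i n.
Proof.
  induction n; intros i k H. { reflexivity. }
  destruct k. { lia. }
  rewrite !block_S. simpl. f_equal. apply IHn. lia.
Qed.

Lemma Xinf_char (A : Type) N (g : list A -> bool) x :
  Xinf (f_ind N g) x <-> forall i, g (block x i (S N)) = true.
Proof.
  split.
  - intros H i. specialize (H i (S N) ltac:(lia)). unfold f_ind in H.
    rewrite block_length in H.
    destruct (S N <=? N) eqn:E. { apply Nat.leb_le in E; lia. }
    replace (S N - N) with 1 in H by lia. simpl in H.
    simpl skipn in H. rewrite firstn_all2 in H by (unfold block; rewrite length_map, length_seq; lia).
    destruct (g _); auto.
  - intros H i k hk. unfold f_ind. rewrite block_length.
    destruct (k <=? N) eqn:E; auto.
    apply Nat.leb_gt in E.
    apply forallb_forall. intros j Hj. apply in_seq in Hj.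
    rewrite block_skipn, block_firstn by lia. apply H.
Qed.

Lemma Xinf_ext (A : Type) (F : list A -> bool) x y :
  (forall n, x n = y n) -> Xinf F x -> Xinf F y.
Proof. intros E H i k hk. rewrite <- (@block_ext A x y i k E). apply H; auto. Qed.

Lemma app_seq_nth (A : Type) (l : list A) s : forall n,
  app_seq l s n = nth n l (s (n - length l)).
Proof.
  induction l; intros n.
  - simpl. rewrite Nat.sub_0_r. destruct n; reflexivity.
  - destruct n; simpl. reflexivity. apply IHl.
Qed.

Lemma block_cons (A : Type) (a : A) (r : nat -> A) (i k : nat) : block (Defs.cons_seq a r) (S i) k = block r i k.
Proof. unfold block. apply map_ext. intros; reflexivity. Qed.

Lemma block_app_seq (A : Type) (l1 l2 : list A) s :
  block (app_seq (l1 ++ l2) s) 0 (length l1) = l1.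
Proof.
  revert s. induction l1; intros s. reflexivity.
  simpl length. rewrite block_S. simpl app_seq at 1. simpl.
  unfold app_seq in *. simpl. rewrite block_cons. f_equal. apply IHl1.
Qed.

Lemma block_of_list (A : Type) (u : list A) : forall f i,
  (forall j c, nth_error u j = Some c -> f (i + j) = c) -> block f i (length u) = u.
Proof.
  induction u; intros f i H. reflexivity.
  simpl length. rewrite block_S. f_equal.
  - specialize (H 0 a eq_refl). rewrite Nat.add_0_r in H. exact H.
  - apply IHu. intros j c Hj. rewrite <- (H (S j) c Hj). f_equal; lia.
Qed.

Lemma skipn_nth (A : Type) (l : list A) d : forall k, k < length l ->
  skipn k l = nth k l d :: skipn (S k) l.
Proof.
  induction l; intros k H. simpl in H; lia.
  destruct k. reflexivity. simpl. apply IHl. simpl in H; lia.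
Qed.

Lemma block_eq_list (A : Type) (f : nat -> A) (l : list A) d n : forall k,
  k + n <= length l -> (forall j, j < n -> f (k + j) = nth (k + j) l d) ->
  block f k n = firstn n (skipn k l).
Proof.
  induction n; intros k H E. reflexivity.
  rewrite block_S. rewrite (@skipn_nth A l d k) by lia. simpl. f_equal.
  - specialize (E 0 ltac:(lia)). rewrite Nat.add_0_r in E. exact E.
  - apply IHn. lia. intros j Hj. replace (S k + j) with (k + S j) by lia. apply E; lia.
Qed.

Lemma inf_infinite (A : Type) (P : A -> Prop) : infinitely_many P -> infinite_type A.
Proof. intros H [l Hl]. apply H. exists l. intros a _. apply Hl. Qed.

Lemma inf_mono (A : Type) (P Q : A -> Prop) :
  (forall a, P a -> Q a) -> infinitely_many P -> infinitely_many Q.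
Proof. intros HPQ H [l Hl]. apply H. exists l. intros a Ha. apply Hl, HPQ, Ha. Qed.

Lemma mod_big m N : N <> 0 -> N <= m -> m < N + N -> m mod N = m - N.
Proof.
  intros H1 H2 H3. replace m with ((m - N) + 1 * N) at 1 by lia.
  rewrite Nat.Div0.mod_add. apply Nat.mod_small. lia.
Qed.

Theorem proposition1 (A : Type) (HA : infinite_type A) (M : nat) (HM : 1 <= M)
  (ft : list A -> bool)
  (H1 : exists xs : list A, length xs = M /\
          infinitely_many (fun a : A =>
            forall k, k <= M ->
              ft (firstn (M + 2) (skipn k ((xs ++ [a]) ++ (xs ++ [a])))) = true))
  (H2 : forall w : list A, length w = M + 1 ->
          finitely_many (fun b : A => ft (w ++ [b]) = true)) :
  forall (B : Type) (Y : pt B -> Prop),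
    is_Nstep_shift M Y -> ~ conjugate (Xf (f_ind (M + 1) ft)) Y.
Proof.
  intros B Y [g HY] [phi [Hmap [Hinj [Hsurj [Hcont [Hshift Hlen]]]]]].
  destruct H1 as [xs [Hxs Hinf]].
  set (p := fun (a : A) (n : nat) => nth (n mod (M+1)) (xs ++ [a]) a).
  assert (HL : forall a, length (xs ++ [a]) = M + 1).
  { intros a. rewrite length_app, Hxs. reflexivity. }
  assert (pper : forall a n, p a (M + S n) = p a n).
  { intros a n. unfold p. f_equal. replace (M + S n) with (n + 1 * (M+1)) by lia.
    apply Nat.Div0.mod_add. }
  assert (psmall : forall a n, n < M + 1 -> p a n = nth n (xs ++ [a]) a).
  { intros a n Hn. unfold p. rewrite Nat.mod_small by lia. reflexivity. }
  assert (pgood : forall a, (forall k, k <= M ->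
              ft (firstn (M + 2) (skipn k ((xs ++ [a]) ++ (xs ++ [a])))) = true) ->
              Xinf (f_ind (M+1) ft) (p a)).
  { intros a Ga. apply Xinf_char. intros i.
    assert (Hk : i mod (M+1) <= M) by (pose proof (Nat.mod_upper_bound i (M+1)); lia).
    assert (Eb : block (p a) i (S (M+1)) = block (p a) (i mod (M+1)) (S (M+1))).
    { unfold block. apply map_ext. intros j. unfold p. f_equal.
      rewrite Nat.Div0.add_mod_idemp_l. reflexivity. }
    rewrite Eb. replace (S (M+1)) with (M+2) by lia.
    rewrite (@block_eq_list A (p a) ((xs ++ [a]) ++ (xs ++ [a])) a (M+2) (i mod (M+1))).
    - apply Ga. exact Hk.
    - rewrite length_app, HL. lia.
    - intros j Hj. set (k := i mod (M+1)) in *. idtac.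
      destruct (Nat.lt_ge_cases (k + j) (M+1)) as [Hs|Hb].
      + rewrite psmall by exact Hs. rewrite (app_nth1 (xs ++ [a]) (xs ++ [a])) by (rewrite HL; exact Hs). reflexivity.
      + unfold p. rewrite (mod_big (k+j) (M+1)) by lia.
        rewrite (app_nth2 (xs ++ [a]) (xs ++ [a])) by (rewrite HL; exact Hb). rewrite HL. reflexivity. }
  assert (Good_ex : forall a, (forall k, k <= M ->
              ft (firstn (M + 2) (skipn k ((xs ++ [a]) ++ (xs ++ [a])))) = true) ->
              Xinf (f_ind (M+1) ft) (app_seq (xs ++ [a]) (p a))).
  { intros a Ga. apply (@Xinf_ext A _ (p a)). 2: apply pgood, Ga.
    intros n. rewrite app_seq_nth, HL.
    destruct (Nat.lt_ge_cases n (M+1)) as [Hs|Hb].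
    - rewrite psmall by exact Hs. apply nth_indep. rewrite HL; exact Hs.
    - rewrite nth_overflow by (rewrite HL; exact Hb).
      replace n with (M + S (n - (M+1))) at 1 by lia. apply pper. }
  assert (Lw : Xf (f_ind (M + 1) ft) (Fin xs)).
  { simpl. intros [l Hl]. apply Hinf. exists l. intros a Ga. apply Hl.
    exists (p a). apply Good_ex, Ga. }
  pose proof (Hlen _ Lw) as Lnw. pose proof (Hmap _ Lw) as Yw.
  destruct (phi (Fin xs)) as [u|y0] eqn:Ew; simpl in Lnw; [|discriminate].
  injection Lnw as Hu. rewrite Hxs in Hu.
  apply HY in Yw. simpl in Yw.
  assert (HB : infinite_type B) by (eapply inf_infinite; exact Yw).
  destruct (Hcont (cyl u [])) as [U [HUo HUeq]].
  { intros y Hy. exists u, []. split; auto. }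
  assert (Uw : U (Fin xs)).
  { apply (HUeq _ Lw). rewrite Ew. split; [exact HB|]. split.
    - intros i c Hc. exact Hc.
    - intros c _ []. }
  destruct (HUo _ Uw) as [x [F [[_ [Hpre HF]] HsubU]]].
  assert (Hxl : length x <= M).
  { destruct (Nat.le_gt_cases (length x) M) as [h|h]; auto.
    destruct (nth_error x M) as [c|] eqn:Ec.
    - specialize (Hpre _ _ Ec). simpl in Hpre.
      assert (nth_error xs M = None) by (apply nth_error_None; lia). congruence.
    - apply nth_error_None in Ec. lia. }
  assert (Hex : exists a, (forall k, k <= M ->
              ft (firstn (M + 2) (skipn k ((xs ++ [a]) ++ (xs ++ [a])))) = true) /\ ~ In a F).
  { apply NNPP. intros Hn. apply Hinf. exists F. intros a Ga.
    apply NNPP. intros Hna. apply Hn. exists a. auto. }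
  destruct Hex as [a [Ga HaF]].
  assert (Lp : Xf (f_ind (M + 1) ft) (Inf (p a))) by (simpl; apply pgood, Ga).
  assert (Up : U (Inf (p a))).
  { apply HsubU. split; [exact I|]. split.
    - intros i c Hc. simpl. f_equal. pose proof (Hpre _ _ Hc) as Hc'. simpl in Hc'.
      assert (i < M) by (rewrite <- Hxs; apply nth_error_Some; congruence).
      rewrite psmall by lia. rewrite app_nth1 by lia. apply nth_error_nth; exact Hc'.
    - intros c Hc. simpl in Hc. injection Hc as <-.
      destruct (Nat.lt_ge_cases (length x) M) as [Hs|Hb].
      + apply HF. simpl. rewrite psmall by lia. rewrite app_nth1 by lia.
        apply nth_error_nth'. lia.
      + replace (length x) with M by lia. rewrite psmall by lia.
        rewrite app_nth2 by lia. rewrite Hxs, Nat.sub_diag. exact HaF. }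
  apply (HUeq _ Lp) in Up.
  pose proof (Hlen _ Lp) as Lnp.
  destruct (phi (Inf (p a))) as [w0|y] eqn:Ep; simpl in Lnp; [discriminate|].
  destruct Up as [_ [Hypre _]].
  set (q := fun n => p a (M + n)).
  assert (Lq : Xf (f_ind (M + 1) ft) (Inf q)).
  { simpl. intros i k hk. replace (block q i k) with (block (p a) (M + i) k).
    - apply pgood; auto.
    - unfold block. apply map_ext. intros j. unfold q. f_equal. lia. }
  pose proof (Hshift _ Lq) as Sq.
  assert (Eq : shift (Inf q) = Inf (p a)).
  { simpl. f_equal. apply functional_extensionality. intros n. unfold q. apply pper. }
  rewrite Eq, Ep in Sq.
  pose proof (Hlen _ Lq) as Lnq. pose proof (Hmap _ Lq) as Yq.
  destruct (phi (Inf q)) as [w1|z] eqn:Eqz; simpl in Lnq; [discriminate|].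
  simpl in Sq. injection Sq as Hyz.
  apply HY in Yq. simpl in Yq.
  assert (Yn : Y (Fin (z 0 :: u))).
  { apply HY. simpl. revert Yw. apply inf_mono. intros b [s Hs]. exists s.
    apply Xinf_char. rewrite Xinf_char in Hs. rewrite Xinf_char in Yq.
    intros [|i].
    - specialize (Yq 0). rewrite block_S in Yq |- *.
      assert (E1 : block z 1 M = u).
      { rewrite <- Hu. apply block_of_list. intros j c Hc.
        specialize (Hypre j c Hc). simpl in Hypre. injection Hypre as Hj.
        rewrite <- Hj, Hyz. reflexivity. }
      simpl app_seq. unfold app_seq in *. simpl.
      rewrite block_cons.
      pose proof (@block_app_seq B u [b] s) as E2. unfold app_seq in E2. rewrite Hu in E2.
      rewrite E2. rewrite E1 in Yq. exact Yq.
    - simpl app_seq. unfold app_seq in *. simpl. rewrite block_cons. apply Hs. }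
  destruct (Hsurj _ Yn) as [x0 [Lx0 Ex0]].
  pose proof (Hlen _ Lx0) as Lnx. rewrite Ex0 in Lnx.
  destruct x0 as [v|?]; simpl in Lnx; [|discriminate].
  injection Lnx as Hv. simpl in Lx0.
  destruct (H2 v ltac:(rewrite <- Hv, Hu; lia)) as [l2 Hl2].
  apply Lx0. exists l2. intros c [s Hs]. apply Hl2.
  rewrite Xinf_char in Hs. specialize (Hs 0).
  pose proof (@block_app_seq A (v ++ [c]) [] s) as E3. rewrite app_nil_r in E3.
  assert (Hlv : length (v ++ [c]) = S (M + 1)) by (rewrite length_app; simpl; lia).
  rewrite Hlv in E3. rewrite E3 in Hs. exact Hs.
Qed.
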